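(* Let $g$ be an element of $A$ or of $B$ with $g\notin H$. Then there exists an integer $t_0>1$ such that for every positive integer $t$ divisible by $t_0$, $g\rho_t\notin H\rho_t$.
   Context: Fix integers $m,n>1$ and let $G_{mn}=\langle a,b;\ [a^m,b^n]=1\rangle$. Put $c=a^m$, $d=b^n$, $H=\langle c,d\rangle$ (free abelian with basis $c,d$), $A=\langle a,H\rangle$, $B=\langle b,H\rangle$. For an integer $t>1$ let $G_{mn}(t)=\langle a,b;\ [a^m,b^n]=1,\ a^{mt}=b^{nt}=1\rangle$ and let $\rho_t:G_{mn}\to G_{mn}(t)$ be the natural homomorphism. *)

(* Defs.v *)
(* Finitely presented groups are encoded by words
   over the generators a, b and the congruence generated by free cancellation
   and the relators (i.e. the quotient of the free group by the normal closure
   of the relators). *)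
From Stdlib Require Import Relations.
From Stdlib Require List.
From mathcomp Require Import all_boot.

Set Implicit Arguments.
Unset Strict Implicit.
Unset Printing Implicit Defensive.

(* A letter: (generator, inverted?).  generator false = a, true = b. *)
Definition letter := (bool * bool)%type.
Definition word := seq letter.

Definition linv (x : letter) : letter := (x.1, ~~ x.2).
Definition winv (w : word) : word := rev (map linv w).

Inductive step (R : seq word) : word -> word -> Prop :=
| step_free (p q : word) (x : letter) : step R (p ++ x :: linv x :: q) (p ++ q)
| step_rel (p q r : word) : List.In r R -> step R (p ++ r ++ q) (p ++ q).

Definition weq (R : seq word) : word -> word -> Prop :=
  clos_refl_sym_trans word (step R).

Inductive in_gen (S : seq word) : word -> Prop :=
| gen_nil : in_gen S [::]
| gen_cons (s w : word) : List.In s S -> in_gen S w -> in_gen S (s ++ w)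
| gen_consinv (s w : word) : List.In s S -> in_gen S w -> in_gen S (winv s ++ w).

Definition mem_sub (R : seq word) (S : seq word) (g : word) : Prop :=
  exists h, in_gen S h /\ weq R g h.

Definition apow (k : nat) : word := nseq k (false, false).
Definition bpow (k : nat) : word := nseq k (true, false).
Definition comm (u v : word) : word := winv u ++ winv v ++ u ++ v.

Definition rels (m n : nat) : seq word := [:: comm (apow m) (bpow n)].
Definition rels_t (m n t : nat) : seq word :=
  [:: comm (apow m) (bpow n); apow (m * t); bpow (n * t)].

(* H = <c, d>, A = <a, H>, B = <b, H> with c = a^m, d = b^n *)
Definition Hgens (m n : nat) : seq word := [:: apow m; bpow n].
Definition Agens (m n : nat) : seq word := [:: apow 1; apow m; bpow n].
Definition Bgens (m n : nat) : seq word := [:: bpow 1; apow m; bpow n].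

(* Main.v *)
Require Import Defs.
From Stdlib Require Import Relations.
From Stdlib Require List.
From mathcomp Require Import all_boot zify.
Set Implicit Arguments.
Unset Strict Implicit.
Unset Printing Implicit Defensive.

Lemma linvK (x : letter) : linv (linv x) = x.
Proof. by case: x => g b; rewrite /linv /= negbK. Qed.

Lemma winv_cons (l : letter) w : winv (l :: w) = winv w ++ [:: linv l].
Proof. by rewrite /winv /= rev_cons cats1. Qed.

Lemma winvK w : winv (winv w) = w.
Proof.
rewrite /winv map_rev revK -map_comp.
by elim: w => //= x w ->; rewrite linvK.
Qed.

Lemma winv_nseq k g b : winv (nseq k (g, b)) = nseq k (g, ~~ b).
Proof. by rewrite /winv map_nseq rev_nseq. Qed.

Lemma step_ctx R u v p q : step R u v -> step R (p ++ u ++ q) (p ++ v ++ q).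
Proof.
case=> [p0 q0 x|p0 q0 r Hr].
- have := step_free R (p ++ p0) (q0 ++ q) x.
  by rewrite -!catA /=.
- have := step_rel (p ++ p0) (q0 ++ q) Hr.
  by rewrite -!catA.
Qed.

Lemma weq_refl R u : weq R u u.
Proof. exact: rst_refl. Qed.
Lemma weq_sym R u v : weq R u v -> weq R v u.
Proof. exact: rst_sym. Qed.
Lemma weq_trans R u v w : weq R u v -> weq R v w -> weq R u w.
Proof. exact: rst_trans. Qed.

Lemma weq_ctx R u v p q : weq R u v -> weq R (p ++ u ++ q) (p ++ v ++ q).
Proof.
elim=> [x y H|x|x y _ IH|x y z _ IH1 _ IH2].
- by apply: rst_step; apply: step_ctx.
- exact: weq_refl.
- exact: weq_sym.
- exact: weq_trans IH1 IH2.
Qed.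

Lemma weq_ctxl R u v p : weq R u v -> weq R (p ++ u) (p ++ v).
Proof. by move=> H; have := weq_ctx p [::] H; rewrite !cats0. Qed.
Lemma weq_ctxr R u v q : weq R u v -> weq R (u ++ q) (v ++ q).
Proof. by move=> H; have := weq_ctx [::] q H. Qed.

Lemma weq_free R p q x : weq R (p ++ x :: linv x :: q) (p ++ q).
Proof. by apply: rst_step; apply: step_free. Qed.

Lemma cancel_r R w : weq R (w ++ winv w) [::].
Proof.
elim: w => [|l w IH] /=; first exact: weq_refl.
rewrite winv_cons.
apply: weq_trans (_ : weq R ([:: l] ++ [::] ++ [:: linv l]) _).
  by have := weq_ctx [:: l] [:: linv l] IH; rewrite /= catA.
exact: (weq_free R [::] [::] l).
Qed.

Lemma cancel_l R w : weq R (winv w ++ w) [::].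
Proof. by have := cancel_r R (winv w); rewrite winvK. Qed.

Lemma cancel_rc R p w q : weq R (p ++ w ++ winv w ++ q) (p ++ q).
Proof. by have H := weq_ctx p q (cancel_r R w); rewrite /= -catA in H. Qed.
Lemma cancel_lc R p w q : weq R (p ++ winv w ++ w ++ q) (p ++ q).
Proof. by have H := weq_ctx p q (cancel_l R w); rewrite /= -catA in H. Qed.

Definition cm R x y := weq R (x ++ y) (y ++ x).

Lemma cm_sym R x y : cm R x y -> cm R y x.
Proof. exact: weq_sym. Qed.

Lemma cm_nil R x : cm R x [::].
Proof. by rewrite /cm cats0; exact: weq_refl. Qed.

Lemma cm_cat R x y z : cm R x y -> cm R x z -> cm R x (y ++ z).
Proof.
move=> H1 H2; rewrite /cm.
apply: weq_trans (_ : weq R (y ++ x ++ z) _).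
  by rewrite !catA; apply: weq_ctxr.
by rewrite -catA; apply: weq_ctxl.
Qed.

Lemma cm_winv R x y : cm R x y -> cm R (winv x) y.
Proof.
move=> H; rewrite /cm.
apply: weq_trans (_ : weq R (winv x ++ y ++ x ++ winv x) _).
  apply: weq_sym; have := cancel_rc R (winv x ++ y) x [::].
  by rewrite !cats0 -!catA.
apply: weq_trans (_ : weq R (winv x ++ x ++ y ++ winv x) _).
  have := weq_ctx (winv x) (winv x) (weq_sym H).
  by rewrite -!catA.
exact: (cancel_lc R [::] x (y ++ winv x)).
Qed.

Lemma cm_winvr R x y : cm R x y -> cm R x (winv y).
Proof. by move=> H; apply: cm_sym; apply: cm_winv; apply: cm_sym. Qed.

Lemma step_mono R R' u v : (forall r, List.In r R -> List.In r R') ->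
  step R u v -> step R' u v.
Proof. by move=> HR [p q x|p q r Hr]; [apply: step_free|apply: step_rel; apply: HR]. Qed.

Lemma weq_mono R R' u v : (forall r, List.In r R -> List.In r R') ->
  weq R u v -> weq R' u v.
Proof.
move=> HR; elim=> [x y H|x|x y _ IH|x y z _ IH1 _ IH2].
- by apply: rst_step; apply: step_mono H.
- exact: weq_refl.
- exact: weq_sym.
- exact: weq_trans IH1 IH2.
Qed.

Lemma cm_of_comm R X Y : List.In (comm X Y) R -> cm R X Y.
Proof.
move=> Hin; apply: weq_sym; rewrite /cm.
apply: weq_trans (_ : weq R (Y ++ X ++ comm X Y) _).
  have := step_rel (Y ++ X) [::] Hin.
  rewrite !cats0 -catA => H; apply: weq_sym; exact: rst_step H.
rewrite /comm.
apply: weq_trans (_ : weq R (Y ++ winv Y ++ X ++ Y) _).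
  exact: (cancel_rc R Y X (winv Y ++ X ++ Y)).
exact: (cancel_rc R [::] Y (X ++ Y)).
Qed.


Definition pt := seq (bool * nat).

Definition cons_syl (ord : bool -> nat) g e (x : pt) : pt :=
  if e %% ord g == 0 then x else (g, e %% ord g) :: x.

Definition mult (ord : bool -> nat) g e (x : pt) : pt :=
  if x is (g', k) :: x' then
    (if g' == g then cons_syl ord g (k + e) x' else cons_syl ord g e x)
  else cons_syl ord g e x.

Definition htag (x : pt) : option bool := if x is (g, _) :: _ then Some g else None.

Fixpoint good (ord : bool -> nat) (x : pt) : bool :=
  match x with
  | [::] => true
  | (g, k) :: x' => [&& 0 < k, k < ord g, good ord x' & htag x' != Some g]
  end.

Lemma cons_syl_good ord g e x : 0 < ord g -> good ord x -> htag x != Some g ->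
  good ord (cons_syl ord g e x).
Proof.
move=> Ho Hx Hh; rewrite /cons_syl; case: eqP => // /eqP H /=.
by rewrite lt0n H ltn_pmod // Hx Hh.
Qed.

Lemma mult_nothead ord g e x : htag x != Some g -> mult ord g e x = cons_syl ord g e x.
Proof. by case: x => [|[g' k] x'] //= H; case: eqP => // E; rewrite E eqxx in H. Qed.

Lemma mult_good ord g e x : 0 < ord g -> good ord x -> good ord (mult ord g e x).
Proof.
move=> Ho; case: x => [|[g' k] x'] /=.
  by move=> _; apply: cons_syl_good.
case/and4P=> Hk Hko Hx Hh; case: eqP => [E|NE].
  by subst g'; apply: cons_syl_good.
apply: cons_syl_good => //=; first by rewrite Hk Hko Hx Hh.
by apply/eqP => -[E]; apply: NE.
Qed.

Lemma cons_syl_mod ord g e x : cons_syl ord g (e %% ord g) x = cons_syl ord g e x.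
Proof. by rewrite /cons_syl modn_mod. Qed.

Lemma cons_syl_eq ord g e f x : e = f %[mod ord g] -> cons_syl ord g e x = cons_syl ord g f x.
Proof. by rewrite /cons_syl => ->. Qed.

Lemma mult_consA ord g e f x : htag x != Some g ->
  mult ord g e (cons_syl ord g f x) = cons_syl ord g (f + e) x.
Proof.
move=> Hh; rewrite {1}/cons_syl; case: eqP => [H|H].
  rewrite mult_nothead //; apply: cons_syl_eq.
  by rewrite -modnDml H.
rewrite /= eqxx; apply: cons_syl_eq; by rewrite modnDml.
Qed.

Lemma mult_add ord g e f x : 0 < ord g -> good ord x ->
  mult ord g e (mult ord g f x) = mult ord g (f + e) x.
Proof.
move=> Ho; case: x => [|[g' k] x'] /=.
  by move=> _; rewrite mult_consA.
case/and4P=> Hk Hko Hx Hh; case: eqP => [E|NE].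
  by subst g'; rewrite mult_consA // addnA.
rewrite mult_consA //=; by apply/eqP => -[E]; apply: NE.
Qed.

Lemma mult_id ord g e x : good ord x -> ord g %| e -> mult ord g e x = x.
Proof.
case: x => [|[g' k] x'] /=.
  by move=> _ /eqP He; rewrite /cons_syl He eqxx.
case/and4P=> Hk Hko Hx Hh He; case: eqP => [E|NE].
  subst g'; rewrite /cons_syl -modnDmr (eqP He) addn0 modn_small //.
  by rewrite eqn0Ngt Hk.
by rewrite /cons_syl (eqP He) eqxx.
Qed.

Definition act ord (l : letter) (x : pt) : pt :=
  mult ord l.1 (if l.2 then (ord l.1).-1 else 1) x.

Definition actw ord (w : word) (x : pt) : pt := foldr (act ord) x w.

Lemma actw_cat ord u v x : actw ord (u ++ v) x = actw ord u (actw ord v x).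
Proof. by rewrite /actw foldr_cat. Qed.

Lemma actw_good ord w x : (forall g, 0 < ord g) -> good ord x -> good ord (actw ord w x).
Proof. by move=> Ho Hx; elim: w => //= l w IH; apply: mult_good. Qed.

Lemma act_inv ord l x : (forall g, 0 < ord g) -> good ord x ->
  act ord (linv l) (act ord l x) = x.
Proof.
move=> Ho Hx; case: l => g b; rewrite /act /linv /= mult_add //.
apply: mult_id => //; case: b => /=; rewrite ?addn1 ?add1n prednK //.
Qed.

Lemma actw_winv ord w x : (forall g, 0 < ord g) -> good ord x ->
  actw ord (winv w) (actw ord w x) = x.
Proof.
move=> Ho; elim: w x => //= l w IH x Hx.
rewrite winv_cons actw_cat /= act_inv ?IH //; exact: actw_good.
Qed.

Lemma actw_nseqp ord g k x : 0 < ord g -> good ord x ->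
  actw ord (nseq k (g, false)) x = mult ord g k x.
Proof.
move=> Ho Hx; elim: k => [|k IH] /=; first by rewrite mult_id.
by rewrite /act /= IH mult_add // addn1.
Qed.

Lemma actw_nseqn ord g k x : 0 < ord g -> good ord x ->
  actw ord (nseq k (g, true)) x = mult ord g (k * (ord g).-1) x.
Proof.
move=> Ho Hx; elim: k => [|k IH] /=; first by rewrite mult_id.
by rewrite /act /= IH mult_add // mulSn addnC.
Qed.

Lemma weq_act ord R u v : (forall g, 0 < ord g) ->
  (forall r, List.In r R -> forall x, good ord x -> actw ord r x = x) ->
  weq R u v -> forall x, good ord x -> actw ord u x = actw ord v x.
Proof.
move=> Ho HR; elim=> [a b H|a|a b _ IH|a b c _ IH1 _ IH2] x Hx //.
- case: H => [p q l|p q r Hr].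
    rewrite !actw_cat /=.
    have := act_inv (linv l) Ho (actw_good q Ho Hx).
    by rewrite linvK => ->.
  by rewrite !actw_cat (HR r Hr) //; exact: (actw_good _ Ho Hx).
- by rewrite IH.
- by rewrite IH1 ?IH2.
Qed.


Lemma comm_triv ord X Y x : (forall g, 0 < ord g) -> good ord x ->
  ((forall y, good ord y -> actw ord X y = y) \/ (forall y, good ord y -> actw ord Y y = y)) ->
  actw ord (comm X Y) x = x.
Proof.
move=> Ho Hx HXY; rewrite /comm !actw_cat.
have Gy : forall w y, good ord y -> good ord (actw ord w y) by move=> w y; exact: actw_good.
case: HXY => H.
  rewrite (H _ (Gy _ _ Hx)) actw_winv //.
  by rewrite -{1}(H x Hx) actw_winv.
rewrite (H x Hx).
have -> : actw ord (winv Y) (actw ord X x) = actw ord X x.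
  by rewrite -{1}(H _ (Gy X _ Hx)) actw_winv // Gy.
by rewrite actw_winv.
Qed.

Lemma rels_triv ord m n t : (forall g, 0 < ord g) -> ord false %| m * t -> ord true %| n * t ->
  (ord false %| m \/ ord true %| n) ->
  forall r, List.In r (rels_t m n t) -> forall x, good ord x -> actw ord r x = x.
Proof.
move=> Ho H1 H2 H3 r Hr x Hx.
case: Hr => [<-|[<-|[<-|[]]]].
- apply: comm_triv => //; case: H3 => H; [left|right] => y Hy.
    by rewrite /apow actw_nseqp // mult_id.
  by rewrite /bpow actw_nseqp // mult_id.
- by rewrite /apow actw_nseqp // mult_id.
- by rewrite /bpow actw_nseqp // mult_id.
Qed.

Inductive syl := SU of nat | SVp of nat | SVn of nat.

Definition sylw (u v : bool) (q : nat) (x : syl) : word :=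
  match x with
  | SU k => nseq k (u, false)
  | SVp j => nseq (q * j) (v, false)
  | SVn j => nseq (q * j) (v, true)
  end.

Definition wordS u v q (s : seq syl) : word := flatten (map (sylw u v q) s).

Definition isU (x : syl) := if x is SU _ then true else false.

Definition okS p (x : syl) :=
  match x with SU k => (0 < k) && (k < p) | SVp j => 0 < j | SVn j => 0 < j end.

Fixpoint reduced p (s : seq syl) : bool :=
  match s with
  | [::] => true
  | x :: s' => [&& okS p x, reduced p s' & (if s' is y :: _ then isU x != isU y else true)]
  end.

Definition bnd t (s : seq syl) :=
  all (fun x => match x with SU _ => true | SVp j => j < t | SVn j => j < t end) s.

Definition ordf (u : bool) (p Q : nat) (g : bool) := if g == u then p else Q.

Lemma modneg q j t : 0 < q -> 0 < j -> j < t ->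
  (q * j * (q * t).-1) %% (q * t) != 0.
Proof.
move=> Hq Hj Hjt.
have Hqt : 0 < q * t by rewrite muln_gt0 Hq (leq_ltn_trans _ Hjt).
have Hlt : q * j < q * t by rewrite ltn_pmul2l.
have -> : q * j * (q * t).-1 = q * t * (q * j).-1 + (q * t - q * j).
  set Q := q * t in Hqt Hlt *; set J := q * j in Hlt *.
  have HJ : 0 < J by rewrite /J muln_gt0 Hq.
  nia.
rewrite [q * t * _]mulnC modnMDl modn_small; last by lia.
lia.
Qed.


Definition tagall (g : bool) (x : pt) := all (fun z => z.1 == g) x.
Definition hastag (g : bool) (x : pt) := has (fun z => z.1 == g) x.

Lemma cons_syl_all ord g e x : tagall g x -> tagall g (cons_syl ord g e x).
Proof. by rewrite /cons_syl; case: eqP => //= _ ->; rewrite eqxx. Qed.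

Lemma mult_all ord g e x : tagall g x -> tagall g (mult ord g e x).
Proof.
case: x => [|[g' k] x'] /=; first by move=> _; apply: cons_syl_all.
case/andP => /eqP E H; subst g'; rewrite eqxx; exact: cons_syl_all.
Qed.

Lemma tagall_htag g g' x : tagall g x -> g' != g -> htag x != Some g'.
Proof.
case: x => [|[g0 k] x'] //= /andP[/eqP E _] H; subst g0.
by apply/eqP => -[E]; rewrite E eqxx in H.
Qed.

Lemma ordf_u u p Q : ordf u p Q u = p.
Proof. by rewrite /ordf eqxx. Qed.
Lemma ordf_v u p Q : ordf u p Q (~~ u) = Q.
Proof. by rewrite /ordf; case: u. Qed.

Lemma ordf_pos u p Q : 0 < p -> 0 < Q -> forall g, 0 < ordf u p Q g.
Proof. by move=> Hp HQ g; rewrite /ordf; case: eqP. Qed.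

Lemma sep u p q t s y : 1 < p -> 0 < q -> 0 < t ->
  reduced p s -> bnd t s -> good (ordf u p (q * t)) y -> tagall (~~ u) y ->
  [/\ good (ordf u p (q * t)) (actw (ordf u p (q * t)) (wordS u (~~ u) q s) y),
      (~~ has isU s -> tagall (~~ u) (actw (ordf u p (q * t)) (wordS u (~~ u) q s) y)),
      (has isU s -> hastag u (actw (ordf u p (q * t)) (wordS u (~~ u) q s) y)) &
      (forall x s1, s = x :: s1 -> has isU s ->
         htag (actw (ordf u p (q * t)) (wordS u (~~ u) q s) y)
         = Some (if isU x then u else ~~ u))].
Proof.
move=> Hp Hq Ht; set ord := ordf u p (q * t).
have Hqt : 0 < q * t by rewrite muln_gt0 Hq Ht.
have Ho : forall g, 0 < ord g by apply: ordf_pos => //; lia.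
have Hou : ord u = p by rewrite /ord ordf_u.
have Hov : ord (~~ u) = q * t by rewrite /ord ordf_v.
move=> Hr Hb Hy Hty.
elim: s Hr Hb => [|x s1 IH] Hr Hb; first by split.
move: Hr => /= /and3P[Hx Hr1 Halt]; move: Hb => /= /andP[Hbx Hb1].
have [G1 T1 H1 D1] := IH Hr1 Hb1.
rewrite /wordS /= -/(wordS u (~~ u) q s1) actw_cat.
set z1 := actw ord (wordS u (~~ u) q s1) y in G1 T1 H1 D1 *.
have Hh1 : has isU s1 -> exists y1 s2, s1 = y1 :: s2 /\ htag z1 = Some (if isU y1 then u else ~~ u).
  move=> HH; case E: s1 => [|y1 s2]; first by rewrite E in HH.
  by exists y1, s2; split => //; exact: D1 E HH.
have Huv : (~~ u == u) = false by case: (u).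
have Huv' : (u == ~~ u) = false by case: (u).
case: x Hx Hbx Halt => [k|j|j] /= Hx Hbx Halt.
- have Hz1 : htag z1 != Some u.
    case Hs: (has isU s1).
      have [y1 [s2 [E ->]]] := Hh1 Hs; rewrite E in Halt.
      by case: (isU y1) Halt => //= _; rewrite eqE /= Huv.
    by apply: tagall_htag; [apply: T1; rewrite Hs | rewrite Huv'].
  rewrite actw_nseqp // ?Hou // mult_nothead //.
  rewrite /cons_syl Hou modn_small; last by case/andP: Hx.
  have -> : (k == 0) = false by case/andP: Hx; case: k.
  split => //=.
  + by rewrite Hou; apply/and4P; split => //; case/andP: Hx.
  + by rewrite eqxx.
  + by move=> x s0 [<- _].
- have Hz1v : has isU s1 -> htag z1 != Some (~~ u).
    move=> Hs; have [y1 [s2 [E ->]]] := Hh1 Hs; rewrite E in Halt.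
    by case: (isU y1) Halt => //= _; rewrite eqE /= Huv'.
  have Hne : (q * j) %% (q * t) == 0 = false.
    by apply/negbTE; rewrite modn_small ?ltn_pmul2l // -lt0n muln_gt0 Hq.
  rewrite actw_nseqp ?Hov //; split.
  + exact: mult_good.
  + by move=> Hn; apply: mult_all; exact: T1 Hn.
  + by move=> Hs; rewrite mult_nothead ?Hz1v // /cons_syl Hov Hne /= H1 // orbT.
  + by move=> x0 s0 [<- _] Hs; rewrite mult_nothead ?Hz1v // /cons_syl Hov Hne.
- have Hz1v : has isU s1 -> htag z1 != Some (~~ u).
    move=> Hs; have [y1 [s2 [E ->]]] := Hh1 Hs; rewrite E in Halt.
    by case: (isU y1) Halt => //= _; rewrite eqE /= Huv'.
  have Hne : (q * j * (q * t).-1) %% (q * t) == 0 = false.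
    by apply/negbTE; apply: modneg.
  rewrite actw_nseqn ?Hov //; split.
  + exact: mult_good.
  + by move=> Hn; apply: mult_all; exact: T1 Hn.
  + by move=> Hs; rewrite mult_nothead ?Hz1v // /cons_syl Hov Hne /= H1 // orbT.
  + by move=> x0 s0 [<- _] Hs; rewrite mult_nothead ?Hz1v // /cons_syl Hov Hne.
Qed.


Definition PrepOK R u v p q SH (x : word) s hh := exists s' hh',
  [/\ reduced p s', in_gen SH hh' & weq R (x ++ wordS u v q s ++ hh) (wordS u v q s' ++ hh')].

Lemma wordS_cons u v q x s : wordS u v q (x :: s) = sylw u v q x ++ wordS u v q s.
Proof. by []. Qed.

Lemma nseq_mulS T q j (l : T) : nseq (q * j.+1) l = nseq q l ++ nseq (q * j) l.
Proof. by rewrite mulnS nseqD. Qed.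

Lemma cmC_wordS R u v p q s : cm R (nseq p (u, false)) (nseq q (v, false)) ->
  cm R (nseq p (u, false)) (wordS u v q s).
Proof.
move=> H; elim: s => [|x s IH]; first exact: cm_nil.
rewrite wordS_cons; apply: cm_cat => //.
case: x => [k|j|j] /=.
- by rewrite /cm -!nseqD addnC; exact: weq_refl.
- elim: j => [|j IHj]; first by rewrite muln0; exact: cm_nil.
  by rewrite nseq_mulS; apply: cm_cat.
- have -> : nseq (q * j) (v, true) = winv (nseq (q * j) (v, false)) by rewrite winv_nseq.
  apply: cm_winvr.
  elim: j => [|j IHj]; first by rewrite muln0; exact: cm_nil.
  by rewrite nseq_mulS; apply: cm_cat.
Qed.

Lemma cmCi_wordS R u v p q s : cm R (nseq p (u, false)) (nseq q (v, false)) ->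
  cm R (nseq p (u, true)) (wordS u v q s).
Proof.
move=> H; have := cm_winv (cmC_wordS s H); by rewrite winv_nseq.
Qed.

Lemma reduced_cons p x s : reduced p (x :: s) =
  [&& okS p x, reduced p s & (if s is y :: _ then isU x != isU y else true)].
Proof. by []. Qed.


Lemma prep_C R u v p q SH s hh : cm R (nseq p (u, false)) (nseq q (v, false)) ->
  List.In (nseq p (u, false)) SH -> reduced p s -> in_gen SH hh ->
  PrepOK R u v p q SH (nseq p (u, false)) s hh.
Proof.
move=> Hc HC Hr Hh; exists s, (nseq p (u, false) ++ hh); split => //.
  exact: gen_cons.
by have := weq_ctxr hh (cmC_wordS s Hc); rewrite -!catA.
Qed.

Lemma prep_Ci R u v p q SH s hh : cm R (nseq p (u, false)) (nseq q (v, false)) ->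
  List.In (nseq p (u, false)) SH -> reduced p s -> in_gen SH hh ->
  PrepOK R u v p q SH (nseq p (u, true)) s hh.
Proof.
move=> Hc HC Hr Hh; exists s, (nseq p (u, true) ++ hh); split => //.
  by have := gen_consinv HC Hh; rewrite winv_nseq.
by have := weq_ctxr hh (cmCi_wordS s Hc); rewrite -!catA.
Qed.

Lemma prep_a R u v p q SH s hh : 1 < p -> cm R (nseq p (u, false)) (nseq q (v, false)) ->
  List.In (nseq p (u, false)) SH -> reduced p s -> in_gen SH hh ->
  PrepOK R u v p q SH [:: (u, false)] s hh.
Proof.
move=> Hp Hc HC Hr Hh.
have Hnot : (if s is y :: _ then ~~ isU y else true) -> PrepOK R u v p q SH [:: (u, false)] s hh.
  move=> Hn; exists (SU 1 :: s), hh; split => //; last exact: weq_refl.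
  rewrite reduced_cons /= Hp Hr /=; by case: s Hr Hn => // y s' _; case: (isU y).
case: s Hr Hnot => [|[k|j|j] s1] Hr Hnot; try by apply: Hnot.
move: Hr; rewrite reduced_cons => /and3P[/andP[Hk0 Hkp] Hr1 Halt].
case: (ltnP k.+1 p) => Hk.
  exists (SU k.+1 :: s1), hh; split => //; last exact: weq_refl.
  by rewrite reduced_cons /= Hk Hr1 Halt.
have Ek : k.+1 = p by apply/eqP; rewrite eqn_leq Hk Hkp.
exists s1, (nseq p (u, false) ++ hh); split => //; first exact: gen_cons.
rewrite wordS_cons /= -Ek.
have := weq_ctxr hh (cmC_wordS s1 Hc); rewrite -!catA -Ek /=.
by [].
Qed.

Lemma prep_ai R u v p q SH s hh : 1 < p -> cm R (nseq p (u, false)) (nseq q (v, false)) ->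
  List.In (nseq p (u, false)) SH -> reduced p s -> in_gen SH hh ->
  PrepOK R u v p q SH [:: (u, true)] s hh.
Proof.
move=> Hp Hc HC Hr Hh.
have Hnot : (if s is y :: _ then ~~ isU y else true) -> PrepOK R u v p q SH [:: (u, true)] s hh.
  move=> Hn; exists (SU p.-1 :: s), (nseq p (u, true) ++ hh); split => //.
  - rewrite reduced_cons /= Hr; apply/and3P; split => //.
      by apply/andP; split; lia.
  - by have := gen_consinv HC Hh; rewrite winv_nseq.
  apply: weq_trans (_ : weq R (nseq p (u, true) ++ nseq p.-1 (u, false) ++ wordS u v q s ++ hh) _).
    have Ep : p = p.-1.+1 by rewrite prednK //; lia.
    have -> : nseq p (u, true) = (u, true) :: nseq p.-1 (u, true) by rewrite {1}Ep.
    have := cancel_lc R [:: (u, true)] (nseq p.-1 (u, false)) (wordS u v q s ++ hh).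
    rewrite winv_nseq /= => H; exact: weq_sym H.
  have := weq_ctxr hh (cmCi_wordS (SU p.-1 :: s) Hc).
  move=> H; rewrite !wordS_cons -!catA in H; rewrite wordS_cons -!catA; exact: H.
case: s Hr Hnot => [|[k|j|j] s1] Hr Hnot; try by apply: Hnot.
move: Hr; rewrite reduced_cons => /and3P[/andP[Hk0 Hkp] Hr1 Halt]; clear Hnot.
case: k Hk0 Hkp Halt => [|k] // _ Hkp Halt.
case: k Hkp Halt => [|k] Hkp Halt.
  exists s1, hh; split => //.
  exact: (weq_free R [::] (wordS u v q s1 ++ hh) (u, true)).
exists (SU k.+1 :: s1), hh; split => //.
  by rewrite reduced_cons /= Hr1 Halt andbT; lia.
rewrite !wordS_cons -!catA.
exact: (weq_free R [::] (nseq k.+1 (u, false) ++ wordS u v q s1 ++ hh) (u, true)).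
Qed.

Lemma prep_V R u v p q SH s hh : 0 < q ->
  reduced p s -> in_gen SH hh ->
  PrepOK R u v p q SH (nseq q (v, false)) s hh.
Proof.
move=> Hq Hr Hh.
have Hnot : (if s is y :: _ then isU y else true) -> PrepOK R u v p q SH (nseq q (v, false)) s hh.
  move=> Hn; exists (SVp 1 :: s), hh; split => //.
    rewrite reduced_cons /= Hr; by case: s Hr Hn => // y s' _ ->.
  by rewrite wordS_cons /= muln1 -catA; exact: weq_refl.
case: s Hr Hnot => [|[k|j|j] s1] Hr Hnot; try by apply: Hnot.
- move: Hr; rewrite reduced_cons => /and3P[Hj Hr1 Halt]; clear Hnot.
  exists (SVp j.+1 :: s1), hh; split => //; first by rewrite reduced_cons /= Hr1 Halt.
  by rewrite !wordS_cons /= nseq_mulS -!catA; exact: weq_refl.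
- move: Hr; rewrite reduced_cons => /and3P[Hj Hr1 Halt]; clear Hnot.
  case: j Hj Halt => [|j] // _ Halt.
  have H := cancel_rc R [::] (nseq q (v, false)) (nseq (q * j) (v, true) ++ wordS u v q s1 ++ hh).
  rewrite winv_nseq /= in H.
  case: j H Halt => [|j] H Halt.
    exists s1, hh; split => //.
    by rewrite !wordS_cons /= nseq_mulS muln0 /= -!catA; rewrite muln0 /= in H.
  exists (SVn j.+1 :: s1), hh; split => //; first by rewrite reduced_cons /= Hr1 Halt.
  by rewrite !wordS_cons /= nseq_mulS -!catA.
Qed.

Lemma prep_Vi R u v p q SH s hh : 0 < q ->
  reduced p s -> in_gen SH hh ->
  PrepOK R u v p q SH (nseq q (v, true)) s hh.
Proof.
move=> Hq Hr Hh.
have Hnot : (if s is y :: _ then isU y else true) -> PrepOK R u v p q SH (nseq q (v, true)) s hh.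
  move=> Hn; exists (SVn 1 :: s), hh; split => //.
    rewrite reduced_cons /= Hr; by case: s Hr Hn => // y s' _ ->.
  by rewrite wordS_cons /= muln1 -catA; exact: weq_refl.
case: s Hr Hnot => [|[k|j|j] s1] Hr Hnot; try by apply: Hnot.
- move: Hr; rewrite reduced_cons => /and3P[Hj Hr1 Halt]; clear Hnot.
  case: j Hj Halt => [|j] // _ Halt.
  have H := cancel_lc R [::] (nseq q (v, false)) (nseq (q * j) (v, false) ++ wordS u v q s1 ++ hh).
  rewrite winv_nseq /= in H.
  case: j H Halt => [|j] H Halt.
    exists s1, hh; split => //.
    by rewrite !wordS_cons /= nseq_mulS muln0 /= -!catA; rewrite muln0 /= in H.
  exists (SVp j.+1 :: s1), hh; split => //; first by rewrite reduced_cons /= Hr1 Halt.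
  by rewrite !wordS_cons /= nseq_mulS -!catA.
- move: Hr; rewrite reduced_cons => /and3P[Hj Hr1 Halt]; clear Hnot.
  exists (SVn j.+1 :: s1), hh; split => //; first by rewrite reduced_cons /= Hr1 Halt.
  by rewrite !wordS_cons /= nseq_mulS -!catA; exact: weq_refl.
Qed.


Lemma nf R u v p q SG SH h : 1 < p -> 0 < q ->
  cm R (nseq p (u, false)) (nseq q (v, false)) ->
  List.In (nseq p (u, false)) SH ->
  (forall x, List.In x SG -> x = [:: (u, false)] \/ x = nseq p (u, false) \/ x = nseq q (v, false)) ->
  in_gen SG h ->
  exists s hh, [/\ reduced p s, in_gen SH hh & weq R h (wordS u v q s ++ hh)].
Proof.
move=> Hp Hq Hc HC HSG; elim=> [|x w Hx Hw IH|x w Hx Hw IH].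
- by exists [::], [::]; split => //; [exact: gen_nil | exact: (weq_refl R [::])].
- have [s [hh [Hr Hh Hwq]]] := IH.
  have : PrepOK R u v p q SH x s hh.
    case: (HSG x Hx) => [->|[->|->]].
    + exact: prep_a.
    + exact: prep_C.
    + exact: prep_V.
  case=> s' [hh' [Hr' Hh' Hw']]; exists s', hh'; split => //.
  exact: weq_trans (weq_ctxl x Hwq) Hw'.
- have [s [hh [Hr Hh Hwq]]] := IH.
  have : PrepOK R u v p q SH (winv x) s hh.
    case: (HSG x Hx) => [->|[->|->]]; rewrite ?winv_nseq.
    + exact: prep_ai.
    + exact: prep_Ci.
    + exact: prep_Vi.
  case=> s' [hh' [Hr' Hh' Hw']]; exists s', hh'; split => //.
  exact: weq_trans (weq_ctxl (winv x) Hwq) Hw'.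
Qed.

Lemma noU_in_gen u v q SH s hh : List.In (nseq q (v, false)) SH ->
  ~~ has isU s -> in_gen SH hh -> in_gen SH (wordS u v q s ++ hh).
Proof.
move=> HV; elim: s => [|x s IH] //= /norP[Hx Hs] Hh.
rewrite -catA; have {}IH := IH Hs Hh.
case: x Hx => [k|j|j] //= _.
- elim: j => [|j IHj]; first by rewrite muln0.
  by rewrite nseq_mulS -catA; apply: gen_cons.
- elim: j => [|j IHj]; first by rewrite muln0.
  rewrite nseq_mulS -catA -(winv_nseq q v false); exact: gen_consinv.
Qed.

Lemma Hword u p Q SH w y : 0 < p -> 0 < Q ->
  (forall x, List.In x SH -> x = nseq p (u, false) \/ exists q, x = nseq q (~~ u, false)) ->
  in_gen SH w -> good (ordf u p Q) y -> tagall (~~ u) y ->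
  good (ordf u p Q) (actw (ordf u p Q) w y) /\ tagall (~~ u) (actw (ordf u p Q) w y).
Proof.
move=> Hp HQ HSH; set ord := ordf u p Q.
have Ho : forall g, 0 < ord g by exact: ordf_pos.
have Hou : ord u = p by rewrite /ord ordf_u.
move=> Hw; elim: Hw y => [|x w0 Hx Hw0 IH|x w0 Hx Hw0 IH] y Hy Ht //.
- have [G T] := IH y Hy Ht; rewrite actw_cat.
  case: (HSH x Hx) => [->|[q0 ->]].
    by rewrite actw_nseqp // mult_id // Hou.
  by rewrite actw_nseqp //; split; [exact: mult_good | exact: mult_all].
- have [G T] := IH y Hy Ht; rewrite actw_cat.
  case: (HSH x Hx) => [->|[q0 ->]]; rewrite winv_nseq /=.
    by rewrite actw_nseqn // mult_id // Hou dvdn_mulr.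
  by rewrite actw_nseqn //; split; [exact: mult_good | exact: mult_all].
Qed.

Definition bsum (s : seq syl) :=
  sumn (map (fun x => match x with SU _ => 0 | SVp j => j | SVn j => j end) s).

Lemma bnd_of t s : bsum s < t -> bnd t s.
Proof.
elim: s => [|x s IH] //= H; apply/andP; split.
  by case: x H => //= j; rewrite /bsum /=; lia.
by apply: IH; move: H; rewrite /bsum /=; lia.
Qed.

Lemma final u p q m n g s hh t : 1 < p -> 0 < q -> 0 < t ->
  reduced p s -> has isU s -> bnd t s -> in_gen (Hgens m n) hh ->
  weq (rels m n) g (wordS u (~~ u) q s ++ hh) ->
  (forall x, List.In x (Hgens m n) -> x = nseq p (u, false) \/ exists q, x = nseq q (~~ u, false)) ->
  ordf u p (q * t) false %| m * t -> ordf u p (q * t) true %| n * t ->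
  (ordf u p (q * t) false %| m \/ ordf u p (q * t) true %| n) ->
  ~ mem_sub (rels_t m n t) (Hgens m n) g.
Proof.
move=> Hp Hq Ht Hr HU Hb Hhh Hw HSH D1 D2 D3 [h' [Hh' Hw']].
set ord := ordf u p (q * t).
have Hqt : 0 < q * t by rewrite muln_gt0 Hq Ht.
have Ho : forall g, 0 < ord g by apply: ordf_pos => //; lia.
have HR := rels_triv Ho D1 D2 D3.
have E1 := weq_act Ho HR Hw' (x := [::]) erefl.
have Hmono : forall r, List.In r (rels m n) -> List.In r (rels_t m n t).
  by move=> r [<-|[]]; left.
have E2 := weq_act Ho HR (weq_mono Hmono Hw) (x := [::]) erefl.
have Hp0 : 0 < p by lia.
have [_ T1] := Hword Hp0 Hqt HSH Hh' (y := [::]) erefl erefl.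
have [G2 T2] := Hword Hp0 Hqt HSH Hhh (y := [::]) erefl erefl.
rewrite actw_cat in E2.
have [_ _ H3 _] := sep Hp Hq Ht Hr Hb G2 T2.
move: (H3 HU); rewrite -/ord -E2 E1 => Hh.
move: T1 Hh; rewrite -/ord; elim: (actw ord h' [::]) => //= [[g0 k] z] IHz /andP[/eqP -> Hz].
case/orP => [|]; first by case: (u).
exact: IHz.
Qed.


Lemma case_gen u p q m n SG g : 1 < p -> 0 < q ->
  cm (rels m n) (nseq p (u, false)) (nseq q (~~ u, false)) ->
  List.In (nseq p (u, false)) (Hgens m n) -> List.In (nseq q (~~ u, false)) (Hgens m n) ->
  (forall x, List.In x SG -> x = [:: (u, false)] \/ x = nseq p (u, false) \/ x = nseq q (~~ u, false)) ->
  (forall x, List.In x (Hgens m n) -> x = nseq p (u, false) \/ exists q, x = nseq q (~~ u, false)) ->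
  (forall t, 0 < t -> [/\ ordf u p (q * t) false %| m * t, ordf u p (q * t) true %| n * t &
     (ordf u p (q * t) false %| m \/ ordf u p (q * t) true %| n)]) ->
  mem_sub (rels m n) SG g -> ~ mem_sub (rels m n) (Hgens m n) g ->
  exists t0 : nat, 1 < t0 /\
    forall t : nat, 0 < t -> t0 %| t -> ~ mem_sub (rels_t m n t) (Hgens m n) g.
Proof.
move=> Hp Hq Hc HC HV HSG HSH Hord [h [Hh Hw]] Hnot.
have [s [hh [Hr Hhh Hw2]]] := nf Hp Hq Hc HC HSG Hh.
have Hw3 := weq_trans Hw Hw2.
case HU: (has isU s).
  exists (bsum s).+2; split => // t Ht Hdv.
  have Hle := dvdn_leq Ht Hdv.
  have [D1 D2 D3] := Hord t Ht.
  apply: (final Hp Hq Ht Hr HU _ Hhh Hw3 HSH D1 D2 D3).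
  apply: bnd_of; lia.
exfalso; apply: Hnot; exists (wordS u (~~ u) q s ++ hh); split => //.
by apply: noU_in_gen => //; rewrite HU.
Qed.

Theorem proposition2p4 (m n : nat) (g : word) :
  1 < m -> 1 < n ->
  (mem_sub (rels m n) (Agens m n) g \/ mem_sub (rels m n) (Bgens m n) g) ->
  ~ mem_sub (rels m n) (Hgens m n) g ->
  exists t0 : nat, 1 < t0 /\
    forall t : nat, 0 < t -> t0 %| t ->
      ~ mem_sub (rels_t m n t) (Hgens m n) g.
Proof.
move=> Hm Hn Hg Hnot.
have Hc : cm (rels m n) (apow m) (bpow n) by apply: cm_of_comm; left.
case: Hg => Hg.
- apply: (@case_gen false m n m n (Agens m n)) => //; try lia.
  + by left.
  + by right; left.
  + by move=> x [<-|[<-|[<-|[]]]]; [left|right; left|right; right].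
  + by move=> x [<-|[<-|[]]]; [left|right; exists n].
  + move=> t Ht; rewrite /ordf /=; split => //; first by rewrite dvdn_mulr.
    by left.
- apply: (@case_gen true n m m n (Bgens m n)) => //; try lia.
  + exact: cm_sym.
  + by right; left.
  + by left.
  + by move=> x [<-|[<-|[<-|[]]]]; [left|right; right|right; left].
  + by move=> x [<-|[<-|[]]]; [right; exists m|left].
  + move=> t Ht; rewrite /ordf /=; split => //; first by rewrite dvdn_mulr.
    by right.
Qed.
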